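(* For $n\in\mathbb{N}$ let $h=2/\sqrt n$ and $x_k=-\sqrt n+\frac{2k}{\sqrt n}$ for $k=0,1,\dots,n$. For $\mu\in\mathbb{R}$ and $s>0$ define $$I_d=h\sum_{k=0}^n\exp\Big\{-\frac{s^2}{2}(x_k-\mu)^2\Big\},\qquad I_c=\int_{-\infty}^{\infty}\exp\Big\{-\frac{s^2}{2}(x-\mu)^2\Big\}dx.$$ Then $I_d\le\big(1+\frac{\eta s^2}{n}\big)I_c$, where $\eta=3/\sqrt{8\pi e}\le0.37$. *)

(* Defs.v *)
From Stdlib Require Import Reals.
Open Scope R_scope.

Definition improper_integral_R (f : R -> R) (l : R) : Prop :=
  (forall a b : R, exists _ : Riemann_integrable f a b, True) /\
  (forall eps : R, 0 < eps -> exists M : R, forall (a b : R)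
      (pr : Riemann_integrable f a b),
      a <= - M -> M <= b -> Rabs (RiemannInt pr - l) < eps).

Definition gauss (s mu x : R) : R := exp (- (s ^ 2 / 2) * (x - mu) ^ 2).

Definition step (n : nat) : R := 2 / sqrt (INR n).
Definition node (n k : nat) : R := - sqrt (INR n) + 2 * INR k / sqrt (INR n).

(* I_d = h * sum_{k=0}^n gauss(x_k)  (sum_f_R0 f n sums k = 0..n) *)
Definition I_d (n : nat) (s mu : R) : R :=
  step n * sum_f_R0 (fun k => gauss s mu (node n k)) n.

Definition eta : R := 3 / sqrt (8 * PI * exp 1).

(* Main.v *)
Require Import Defs.
From Stdlib Require Import Reals Lra Lia.
From Coquelicot Require Import Coquelicot.
Open Scope R_scope.

Lemma gauss_cont s mu x : continuous (gauss s mu) x.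
Proof. unfold gauss; apply (@ex_derive_continuous R_AbsRing R_NormedModule); auto_derive; auto. Qed.

Lemma gauss_ex s mu a b : ex_RInt (gauss s mu) a b.
Proof. apply (@ex_RInt_continuous R_CompleteNormedModule); intros; apply gauss_cont. Qed.

Lemma gauss_pos s mu x : 0 < gauss s mu x.
Proof. unfold gauss; apply exp_pos. Qed.

Lemma exp_ge1 y : 1 + y <= exp y.
Proof. destruct (Req_dec y 0) as [->|H]; [rewrite exp_0; lra| left; apply exp_ineq1; auto]. Qed.

Lemma gauss_lb s mu x0 x :
  gauss s mu x0 * (1 - s^2*(x0-mu)*(x-x0) - s^2/2*(x-x0)^2) <= gauss s mu x.
Proof.
  unfold gauss.
  replace (-(s^2/2)*(x-mu)^2) with
    (-(s^2/2)*(x0-mu)^2 + (- s^2*(x0-mu)*(x-x0) - s^2/2*(x-x0)^2)) by field.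
  rewrite exp_plus. apply Rmult_le_compat_l; [left; apply exp_pos|].
  pose proof (exp_ge1 (- s^2*(x0-mu)*(x-x0) - s^2/2*(x-x0)^2)). lra.
Qed.

Lemma cell_lb s mu x0 w (hw : 0 <= w) :
  gauss s mu x0 * (2*w - s^2*w^3/3) <= RInt (gauss s mu) (x0-w) (x0+w).
Proof.
  set (q := fun x => gauss s mu x0 * (1 - s^2*(x0-mu)*(x-x0) - s^2/2*(x-x0)^2)).
  set (Q := fun x => gauss s mu x0 * ((x-x0) - s^2*(x0-mu)*(x-x0)^2/2 - s^2*(x-x0)^3/6)).
  assert (HI : is_RInt q (x0-w) (x0+w) (minus (Q (x0+w)) (Q (x0-w)))).
  { apply (@is_RInt_derive R_CompleteNormedModule).
    - intros; unfold Q, q; auto_derive; [auto| field].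
    - intros; unfold q; apply (@ex_derive_continuous R_AbsRing R_NormedModule); auto_derive; auto. }
  assert (HQ : minus (Q (x0+w)) (Q (x0-w)) = gauss s mu x0 * (2*w - s^2*w^3/3)).
  { unfold minus, plus, opp, Q; simpl. field. }
  rewrite HQ in HI. rewrite <- (is_RInt_unique _ _ _ _ HI).
  apply RInt_le; [lra | eexists; eauto | apply gauss_ex |].
  intros; apply gauss_lb.
Qed.

Lemma chasles s mu a b c :
  RInt (gauss s mu) a b + RInt (gauss s mu) b c = RInt (gauss s mu) a c.
Proof. apply (@RInt_Chasles R_CompleteNormedModule (gauss s mu) a b c); apply gauss_ex. Qed.

Lemma RInt_nonneg s mu a b : a <= b -> 0 <= RInt (gauss s mu) a b.
Proof. intros; apply RInt_ge_0; auto; [apply gauss_ex| intros; left; apply gauss_pos]. Qed.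

Lemma node_S n k : (0 < n)%nat -> node n (S k) = node n k + step n.
Proof.
  intros Hn. unfold node, step. rewrite S_INR.
  assert (0 < sqrt (INR n)) by (apply sqrt_lt_R0; apply lt_0_INR; auto).
  field. lra.
Qed.

Lemma sum_cells s mu n w (hn : (0 < n)%nat) (hw0 : 0 <= w) (hw : 2*w <= step n) :
  forall m, sum_f_R0 (fun k => RInt (gauss s mu) (node n k - w) (node n k + w)) m
            <= RInt (gauss s mu) (node n 0 - w) (node n m + w).
Proof.
  induction m as [|m IH]; simpl; [lra|].
  rewrite <- (chasles s mu (node n 0 - w) (node n m + w) (node n (S m) + w)).
  rewrite <- (chasles s mu (node n m + w) (node n (S m) - w) (node n (S m) + w)).
  assert (0 <= RInt (gauss s mu) (node n m + w) (node n (S m) - w)).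
  { apply RInt_nonneg. rewrite node_S; auto. lra. }
  lra.
Qed.
Lemma PI_gt : 31/10 < PI.
Proof.
apply Rnot_le_lt. intro H. pose proof PI2_3_2. pose proof (cos_bound (PI/2) 1 ltac:(lra) ltac:(lra)). rewrite cos_PI2 in H1. destruct H1 as [H1 _].
unfold cos_approx, cos_term in H1. simpl in H1.
assert (Hx : 3/2 < PI/2 <= 31/20) by lra. set (x := PI/2) in *.
clearbody x. field_simplify in H1. 
assert (0 <= x^2) by nra. assert (x^2 <= (31/20)^2) by nra. assert (x^2 >= 9/4) by nra.
set (y := x^2) in *.
replace (x^4) with (y^2) in H1 by (unfold y; ring).
replace (x^6) with (y^3) in H1 by (unfold y; ring). clearbody y.
nra.
Qed.
Lemma exp_sq x b : 0 <= b -> b <= exp x -> b*b <= exp (2*x).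
Proof. intros. replace (2*x) with (x+x) by ring. rewrite exp_plus. apply Rmult_le_compat; lra. Qed.
Lemma e_gt : 267/100 <= exp 1.
Proof.
  assert (H0 : 33/32 <= exp (1/32)) by (pose proof (exp_ineq1 (1/32)); lra).
  assert (H1 : 5317/5000 <= exp (1/16)).
  { replace (1/16) with (2*(1/32)) by field. eapply Rle_trans; [|apply exp_sq; [|exact H0]]; lra. }
  assert (H2 : 2827/2500 <= exp (1/8)).
  { replace (1/8) with (2*(1/16)) by field. eapply Rle_trans; [|apply exp_sq; [|exact H1]]; lra. }
  assert (H3 : 12787/10000 <= exp (1/4)).
  { replace (1/4) with (2*(1/8)) by field. eapply Rle_trans; [|apply exp_sq; [|exact H2]]; lra. }
  assert (H4 : 327/200 <= exp (1/2)).
  { replace (1/2) with (2*(1/4)) by field. eapply Rle_trans; [|apply exp_sq; [|exact H3]]; lra. }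
  replace 1 with (2*(1/2)) by field. eapply Rle_trans; [|apply exp_sq; [|exact H4]]; lra.
Qed.
Lemma eta_bounds : 3/10 <= eta <= 37/100.
Proof.
  unfold eta. pose proof PI_gt. pose proof PI_4. pose proof e_gt. pose proof exp_le_3.
  set (X := 8 * PI * exp 1).
  assert (66 <= X <= 100) by (unfold X; nra).
  assert (812/100 <= sqrt X).
  { rewrite <- (sqrt_square (812/100)) by lra. apply sqrt_le_1_alt. nra. }
  assert (sqrt X <= 10).
  { rewrite <- (sqrt_square 10) by lra. apply sqrt_le_1_alt. nra. }
  split.
  - apply Rmult_le_reg_r with (sqrt X); [lra|]. replace (3 / sqrt X * sqrt X) with 3 by (field; lra). nra.
  - apply Rmult_le_reg_r with (sqrt X); [lra|]. replace (3 / sqrt X * sqrt X) with 3 by (field; lra). nra.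
Qed.

Lemma gauss_le_g s mu x :
  gauss s mu x <= 1 / (1 + s^2*(x-mu)^2/4).
Proof.
  unfold gauss. set (y := s^2/2*(x-mu)^2).
  assert (0 <= y) by (unfold y; apply Rmult_le_pos; [unfold Rdiv; apply Rmult_le_pos; [apply pow2_ge_0| lra] | apply pow2_ge_0]).
  replace (1 + s^2*(x-mu)^2/4) with (1 + y/2) by (unfold y; field).
  replace (- (s^2/2)*(x-mu)^2) with (- y) by (unfold y; field).
  rewrite exp_Ropp. unfold Rdiv. rewrite Rmult_1_l. apply Rinv_le_contravar; [lra|].
  pose proof (exp_ge1 y). lra.
Qed.

Lemma RInt_bound s mu a b (hs : 0 < s) : a <= b -> RInt (gauss s mu) a b <= 2*PI/s.
Proof.
  intros Hab.
  set (g := fun x => 1 / (1 + s^2*(x-mu)^2/4)).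
  set (G := fun x => 2/s * atan (s*(x-mu)/2)).
  assert (HI : is_RInt g a b (minus (G b) (G a))).
  { apply (@is_RInt_derive R_CompleteNormedModule).
    - intros; unfold G, g; auto_derive; [auto|]. unfold Rsqr. field. split; [|lra]. pose proof (pow2_ge_0 (s*(x-mu))). lra.
    - intros; unfold g; apply (@ex_derive_continuous R_AbsRing R_NormedModule); auto_derive. pose proof (pow2_ge_0 (s*(x-mu))). apply Rgt_not_eq. simpl in *. lra. }
  apply Rle_trans with (RInt g a b).
  - apply RInt_le; [lra | apply gauss_ex | eexists; eauto |]. intros; apply gauss_le_g.
  - rewrite (is_RInt_unique _ _ _ _ HI). unfold minus, plus, opp, G; simpl.
    pose proof (atan_bound (s*(b-mu)/2)). pose proof (atan_bound (s*(a-mu)/2)).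
    assert (0 < 2/s) by (apply Rdiv_lt_0_compat; lra).
    replace (2*PI/s) with (2/s*(PI/2) - 2/s*(-PI/2)) by (field; lra).
    apply Rplus_le_compat; [apply Rmult_le_compat_l|apply Ropp_le_contravar, Rmult_le_compat_l]; lra.
Qed.

Lemma numeric s t eta' (hs : 0 < s) (ht : 0 < t) (he : 3/10 <= eta') :
  let w := Rmin t (sqrt 2 / s) in
  0 < w /\ w <= t /\ 2*t <= (1 + eta' * s^2 * t^2) * (2*w - s^2*w^3/3).
Proof.
  intros w. pose proof (sqrt_lt_R0 2 ltac:(lra)) as Hr. pose proof (sqrt_sqrt 2 ltac:(lra)) as Hr2.
  set (r := sqrt 2) in *. clearbody r.
  unfold w, Rmin. destruct (Rle_dec t (r/s)) as [H|H].
  - split; [lra|split;[lra|]].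
    assert (Hst : s*t <= r) by (apply Rmult_le_reg_r with (/s); [apply Rinv_0_lt_compat; lra|];
       replace (s*t*/s) with t by (field; lra); exact H).
    set (v := s^2*t^2). assert (0 <= v <= 2).
    { unfold v. assert (0 <= s*t) by nra. replace (s^2*t^2) with ((s*t)*(s*t)) by ring. split; [nra|]. rewrite <- Hr2. apply Rmult_le_compat; lra. }
    assert (eta'*(1-v/6) >= 1/5).
    { assert (0 <= (eta' - 3/10)*(1-v/6)) by (apply Rmult_le_pos; lra). nra. }
    assert (0 <= v*(eta'*(1-v/6) - 1/6)) by (apply Rmult_le_pos; lra).
    assert (1 <= (1 + eta'*v)*(1 - v/6)) by nra.
    replace (2*t - s^2*t^3/3) with (2*t*(1 - v/6)) by (unfold v; field).
    replace (eta' * s^2 * t^2) with (eta'*v) by (unfold v; ring). nra.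
  - assert (Hst : r < s*t).
    { apply Rnot_le_lt; intro. apply H. apply Rmult_le_reg_r with s; [lra|].
      replace (r/s*s) with r by (field; lra). lra. }
    split; [apply Rdiv_lt_0_compat; lra|split;[lra|]].
    replace (2*(r/s) - s^2*(r/s)^3/3) with (4*r/(3*s)) by (replace ((r/s)^3) with (2*r/s^3) by (rewrite <- Hr2; field; lra); field; lra).
    set (a := s*t).
    assert (HA : 12/10*a^2 - 3*r*a + 4 > 0).
    { pose proof (pow2_ge_0 (a - 5/4*r)). assert (r^2 = 2) by (simpl; lra). nra. }
    assert (HB : 6/10*r*a^2 - 3*a + 2*r > 0).
    { apply Rmult_lt_reg_l with r; [lra|]. replace (r*0) with 0 by ring.
      replace (r*(6/10*r*a^2 - 3*a + 2*r)) with (6/10*(r*r)*a^2 - 3*r*a + 2*(r*r)) by ring.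
      rewrite Hr2. lra. }
    assert (0 <= 2*r*(eta' - 3/10)*a^2).
    { apply Rmult_le_pos; [apply Rmult_le_pos|apply pow2_ge_0]; lra. }
    assert (3*a <= 2*r*(1 + eta'*a^2)) by nra.
    apply Rmult_le_reg_r with (3*s); [lra|].
    replace (4*r/(3*s)) with (4*r*/(3*s)) by reflexivity.
    replace ((1 + eta' * s ^ 2 * t ^ 2) * (4 * r * / (3 * s)) * (3 * s)) with (4*r*(1 + eta'*a^2)) by (unfold a; field; lra).
    replace (2*t*(3*s)) with (6*a) by (unfold a; ring). nra.
Qed.

Lemma abs_between x : - Rabs x <= x <= Rabs x.
Proof. unfold Rabs; destruct (Rcase_abs x); lra. Qed.

Theorem mainTheorem15 (n : nat) (hn : (1 <= n)%nat) (mu s : R) (hs : 0 < s) :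
  eta <= 37 / 100 /\
  exists Ic : R, improper_integral_R (gauss s mu) Ic /\
    I_d n s mu <= (1 + eta * s ^ 2 / INR n) * Ic.
Proof.
  pose proof eta_bounds as Heta.
  split; [lra|].
  set (E := fun y => exists a b, a <= b /\ y = RInt (gauss s mu) a b).
  assert (HB : bound E).
  { exists (2*PI/s). intros y [a [b [Hab ->]]]. apply RInt_bound; auto. }
  assert (HE : exists y, E y) by (exists (RInt (gauss s mu) 0 0); exists 0, 0; split; [lra|auto]).
  destruct (completeness E HB HE) as [Ic [Hub Hlub]].
  exists Ic. split.
  - split.
    + intros a b. exists (ex_RInt_Reals_0 _ _ _ (gauss_ex s mu a b)). auto.
    + intros eps Heps.
      assert (Hy : exists y, E y /\ Ic - eps < y).
      { destruct (Classical_Prop.classic (exists y, E y /\ Ic - eps < y)) as [H|H]; auto.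
        exfalso. assert (is_upper_bound E (Ic - eps)).
        { intros y Hy. apply Rnot_lt_le. intro. apply H. eauto. }
        specialize (Hlub _ H0). lra. }
      destruct Hy as [y [[a0 [b0 [Hab0 ->]]] Hy]].
      exists (Rabs a0 + Rabs b0). intros a b pr Ha Hb.
      rewrite <- (RInt_Reals _ _ _ pr).
      pose proof (abs_between a0). pose proof (abs_between b0).
      assert (HI : RInt (gauss s mu) a b <= Ic) by (apply Hub; exists a, b; split; [lra|auto]).
      rewrite <- (chasles s mu a a0 b), <- (chasles s mu a0 b0 b).
      rewrite <- (chasles s mu a a0 b), <- (chasles s mu a0 b0 b) in HI.
      pose proof (RInt_nonneg s mu a a0 ltac:(lra)). pose proof (RInt_nonneg s mu b0 b ltac:(lra)).
      apply Rabs_def1; lra.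
  - assert (Hn : (0 < n)%nat) by lia.
    assert (HnR : 0 < INR n) by (apply lt_0_INR; auto).
    pose proof (sqrt_lt_R0 _ HnR) as Hsq. pose proof (sqrt_sqrt _ (Rlt_le _ _ HnR)) as Hsq2.
    set (t := / sqrt (INR n)).
    assert (Ht : 0 < t) by (apply Rinv_0_lt_compat; auto).
    destruct (numeric s t eta hs Ht ltac:(lra)) as [Hw0 [Hwt Hkey]].
    set (w := Rmin t (sqrt 2 / s)) in *.
    set (c := 2*w - s^2*w^3/3) in *.
    assert (Hstep : step n = 2*t) by (unfold step, t; field; lra).
    assert (Hfac : eta * s^2 / INR n = eta * s^2 * t^2).
    { unfold t. rewrite <- Hsq2 at 1. field. lra. }
    set (S := sum_f_R0 (fun k => gauss s mu (node n k)) n).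
    assert (HS0 : 0 <= S).
    { unfold S. apply Rle_trans with (sum_f_R0 (fun _ => 0) n).
      - rewrite sum_cte. lra.
      - apply sum_Rle. intros; left; apply gauss_pos. }
    assert (HcS : c * S <= Ic).
    { apply Rle_trans with (sum_f_R0 (fun k => RInt (gauss s mu) (node n k - w) (node n k + w)) n).
      - unfold S. rewrite scal_sum. apply sum_Rle. intros k _.
        apply cell_lb. lra.
      - eapply Rle_trans; [apply sum_cells; auto; lra|].
        apply Hub. eexists; eexists; split; [|reflexivity].
        unfold node. rewrite Rmult_0_r. unfold Rdiv. rewrite Rmult_0_l.
        assert (0 <= 2 * INR n * / sqrt (INR n)).
        { apply Rmult_le_pos; [apply Rmult_le_pos; [lra| apply pos_INR]| left; apply Rinv_0_lt_compat; auto]. }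
        lra. }
    unfold I_d. fold S. rewrite Hstep, Hfac.
    assert (0 <= 1 + eta * s^2 * t^2).
    { assert (0 <= s^2 * t^2) by (apply Rmult_le_pos; apply pow2_ge_0). nra. }
    apply Rle_trans with ((1 + eta * s ^ 2 * t ^ 2) * c * S).
    + apply Rmult_le_compat_r; auto.
    + rewrite Rmult_assoc. apply Rmult_le_compat_l; auto.
Qed.
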